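(* Let $(M_0,g_0)$ be a smooth three-dimensional Riemannian manifold and $M\subset M_0$ an embedded two-dimensional submanifold with induced metric $g$. Work locally, on an open set of $M_0$ meeting $M$ on which there is an adapted orthonormal frame $\{b^1,b^2,b^3\}$: along $M$ the fields $b^1,b^2$ are tangent to $M$ and $b^3$ is a unit normal. Let $b_z^1,b_z^2$ be the restrictions of $b^1,b^2$ to $M$. Let $v=v^1b_z^1+v^2b_z^2$ be a smooth vector field on $M$ with $\mathsf{div}(v)=0$ (divergence with respect to $g$). Then there exists a vector field $u=u^1b^1+u^2b^2+u^3b^3$ on a neighborhood of $M$ in $M_0$ such that: (i) $u^3=0$ on $M$ and $u^j|_M=v^j$ for $j=1,2$; (ii) $\mathsf{div}(u)|_M=\mathsf{div}(v)$; (iii) $\mathsf{div}(u)=0$ on that neighborhood of $M$, where the divergence is with respect to $g_0$.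
   Context: All statements are local. ''A neighborhood of $M$'' means an open subset of $M_0$ containing the relevant (sufficiently small) portion of $M$. *)

(* Defs.v *)
From HB Require Import structures.
From mathcomp Require Import all_boot all_order all_algebra.
From mathcomp Require Import all_classical all_reals all_analysis.
Set Implicit Arguments. Unset Strict Implicit. Unset Printing Implicit Defensive.
Import Order.TTheory GRing.Theory Num.Theory.
Import numFieldNormedType.Exports.
Local Open Scope classical_set_scope.
Local Open Scope ring_scope.

Section Defs.
Variable R : realType.

Definition edir n (i : 'I_n) : 'rV[R]_n := delta_mx 0 i.

Fixpoint iter_partial n (l : seq 'I_n) (f : 'rV[R]_n -> R) : 'rV[R]_n -> R :=
  match l with
  | [::] => f
  | i :: l' => fun x => 'D_(edir i) (iter_partial l' f) x
  end.

Definition smooth_on n (U : set 'rV[R]_n) (f : 'rV[R]_n -> R) : Prop :=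
  forall (l : seq 'I_n) (x : 'rV[R]_n), U x -> differentiable (iter_partial l f) x.

Definition riemannian_on n (U : set 'rV[R]_n) (g : 'rV[R]_n -> 'M[R]_n) : Prop :=
  (forall i j, smooth_on U (fun x => g x i j)) /\
  (forall x, U x -> (g x)^T = g x) /\
  (forall x, U x -> forall w : 'rV[R]_n, w != 0 -> 0 < (w *m g x *m w^T) 0 0).

Definition gdot n (G : 'M[R]_n) (a b : 'rV[R]_n) : R := (a *m G *m b^T) 0 0.

Definition divg n (g : 'rV[R]_n -> 'M[R]_n) (X : 'rV[R]_n -> 'rV[R]_n)
  (x : 'rV[R]_n) : R :=
  (Num.sqrt (\det (g x)))^-1 *
  \sum_(i < n) 'D_(edir i) (fun y => Num.sqrt (\det (g y)) * X y 0 i) x.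

(* the slice M = {x_3 = 0}: embedding of R^2 into R^3 *)
Definition emb (y : 'rV[R]_2) : 'rV[R]_3 :=
  \row_(i < 3) (if (i < 2)%N then y 0 (inord i) else 0).

Definition ord23 (a : 'I_2) : 'I_3 := widen_ord (isT : (2 <= 3)%N) a.

Definition induced_metric (g0 : 'rV[R]_3 -> 'M[R]_3) (y : 'rV[R]_2) : 'M[R]_2 :=
  \matrix_(a < 2, b < 2) g0 (emb y) (ord23 a) (ord23 b).

Definition frame_field n m (b : 'I_m -> 'rV[R]_n -> 'rV[R]_n) (c : 'I_m -> 'rV[R]_n -> R)
  (x : 'rV[R]_n) : 'rV[R]_n := \sum_(j < m) c j x *: b j x.

End Defs.

(* Main.v *)
Require Import Defs.
From HB Require Import structures.
From mathcomp Require Import all_boot all_order all_algebra.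
From mathcomp Require Import all_classical all_reals all_analysis.
From mathcomp Require Import ring lra.
From mathcomp Require Import perm.
Import Order.TTheory GRing.Theory Num.Theory.
Import numFieldNormedType.Exports.
Local Open Scope classical_set_scope.
Local Open Scope ring_scope.
Set Implicit Arguments. Unset Strict Implicit.
Section Gen.
Variable R : realType.
Variable n : nat.
Implicit Types f g : 'rV[R]_n -> R.

Lemma near_eq_differentiable f g x :
  (\forall y \near x, f y = g y) -> differentiable f x -> differentiable g x.
Proof.
move=> fg df.
have e : g = f + (g - f) by rewrite addrC subrK.
have z0 : \forall h \near (0 : 'rV[R]_n), ((g - f) \o shift x) h = 0.
  rewrite (near_shift x); near=> y; rewrite /=.
  rewrite sub0r subrK !fctE (near fg y) ?subrr //.
have zx : (g - f) x = 0 by rewrite !fctE (nbhs_singleton fg) subrr.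
have lo : (g - f) \o shift x = cst ((g - f) x) + (0 : 'rV[R]_n -> R) +o_ (0 : 'rV[R]_n) id.
  apply/eqaddoP => eps eps0; rewrite zx addr0 subr0.
  near=> h; rewrite (near z0 h) // normr0 mulr_ge0 // ltW //.
have dz : differentiable (g - f) x.
  pose z : {linear 'rV[R]_n -> R} := \0.
  have H := @diff_unique _ _ _ (g - f) z x.
  have h1 := (H (@cst_continuous _ _ 0) lo).
  apply/diff_locallyP; rewrite h1; split => //; exact: cst_continuous.
rewrite e; exact: differentiableD.
Unshelve. all: by end_near.
Unshelve. all: by end_near. Qed.

Variable N : set 'rV[R]_n.
Hypothesis oN : open N.

Lemma nearN x : N x -> \forall y \near x, N y.
Proof. by move=> Nx; apply: open_nbhs_nbhs; split. Qed.

Lemma eqN_derive f g x v : (forall y, N y -> f y = g y) -> N x ->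
  'D_v f x = 'D_v g x.
Proof.
move=> fg Nx; apply: near_eq_derive; near=> y; apply: fg; near: y; exact: nearN.
Unshelve. all: by end_near. Qed.

Lemma eqN_differentiable f g x : (forall y, N y -> f y = g y) -> N x ->
  differentiable f x -> differentiable g x.
Proof.
move=> fg Nx; apply: near_eq_differentiable; near=> y; apply: fg; near: y; exact: nearN.
Unshelve. all: by end_near. Qed.

Lemma eqN_iter f g l x : (forall y, N y -> f y = g y) -> N x ->
  iter_partial l f x = iter_partial l g x.
Proof.
move=> fg; elim: l x => [|i l IH] x Nx /=; first exact: fg.
exact: eqN_derive.
Unshelve. all: by end_near. Qed.

Lemma smooth_eqN f g : (forall y, N y -> f y = g y) -> smooth_on N f -> smooth_on N g.
Proof.
move=> fg sf l x Nx; apply: (@eqN_differentiable (iter_partial l f)) => //.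
  by move=> y Ny; exact: eqN_iter.
exact: sf.
Unshelve. all: by end_near. Qed.

Lemma smooth_ind (C : ('rV[R]_n -> R) -> Prop) :
  (forall F, C F -> forall x, N x -> differentiable F x) ->
  (forall F, C F -> forall i : 'I_n, exists G, C G /\ forall x, N x -> 'D_(edir R i) F x = G x) ->
  forall F, C F -> smooth_on N F.
Proof.
move=> Cd CD.
have key : forall l F, C F -> exists G, C G /\ forall x, N x -> iter_partial l F x = G x.
  elim=> [|i l IH] F CF; first by exists F.
  have [G [CG eG]] := IH F CF.
  have [G' [CG' eG']] := CD G CG i.
  exists G'; split => // x Nx /=.
  by rewrite -eG' //; exact: eqN_derive.
move=> F CF l x Nx.
have [G [CG eG]] := key l F CF.
apply: (@eqN_differentiable G) => //; first by move=> y Ny; rewrite eG.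
exact: Cd.
Unshelve. all: by end_near. Qed.

Lemma iter_partial_cat l l' f : iter_partial (l ++ l') f = iter_partial l (iter_partial l' f).
Proof. by elim: l => //= i l ->. Qed.

Lemma smooth_partial f (i : 'I_n) : smooth_on N f -> smooth_on N (fun x => 'D_(edir R i) f x).
Proof.
move=> sf l x Nx.
have := sf (l ++ [:: i]) x Nx; rewrite iter_partial_cat //.
Unshelve. all: by end_near. Qed.

Lemma smooth_differentiable f x : smooth_on N f -> N x -> differentiable f x.
Proof. by move=> sf Nx; exact: (sf [::] x Nx). Qed.

Lemma smooth_derivable f x v : smooth_on N f -> N x -> derivable f x v.
Proof. by move=> sf Nx; apply: diff_derivable; exact: smooth_differentiable. Qed.

Lemma smooth_cst c : smooth_on N (fun _ => c).
Proof.
apply: (@smooth_ind (fun F => exists c, F = fun _ => c)); last by exists c.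
  by move=> F [c' ->] x _; exact: differentiable_cst.
move=> F [c' ->] i; exists (fun _ => 0); split; first by exists 0.
by move=> x _; rewrite (derive_cst c').
Unshelve. all: by end_near. Qed.

Lemma smooth_add f g : smooth_on N f -> smooth_on N g -> smooth_on N (fun x => f x + g x).
Proof.
move=> sf sg.
apply: (@smooth_ind (fun F => exists f g, [/\ smooth_on N f, smooth_on N g &
   forall x, N x -> F x = f x + g x])); last by exists f, g.
  move=> F [f1 [g1 [s1 s2 e]]] x Nx.
  apply: (@eqN_differentiable (f1 + g1)) => //; first by move=> y Ny; rewrite e.
  by apply: differentiableD; exact: smooth_differentiable.
move=> F [f1 [g1 [s1 s2 e]]] i.
exists (fun x => 'D_(edir R i) f1 x + 'D_(edir R i) g1 x); split.
  by exists (fun x => 'D_(edir R i) f1 x), (fun x => 'D_(edir R i) g1 x); split => //;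
   exact: smooth_partial.
move=> x Nx; rewrite (@eqN_derive F (f1 + g1) x _ e Nx).
rewrite deriveD //; exact: smooth_derivable.
Unshelve. all: by end_near. Qed.

End Gen.
Section Gen2.
Variable R : realType.
Variable n : nat.
Implicit Types f g : 'rV[R]_n -> R.
Variable N : set 'rV[R]_n.
Hypothesis oN : open N.

Definition pf := (('rV[R]_n -> R) * ('rV[R]_n -> R))%type.
Definition sp (s : seq pf) y := \sum_(p <- s) p.1 y * p.2 y.
Fixpoint allS (s : seq pf) : Prop :=
  match s with [::] => True | p :: s' => (smooth_on N p.1 /\ smooth_on N p.2) /\ allS s' end.

Fixpoint dseq (i : 'I_n) (s : seq pf) : seq pf :=
  match s with
  | [::] => [::]
  | p :: s' => (fun x => 'D_(edir R i) p.1 x, p.2) :: (p.1, fun x => 'D_(edir R i) p.2 x) :: dseq i s'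
  end.

Lemma sp_cons p s : sp (p :: s) = (fun y => p.1 y * p.2 y) + sp s.
Proof. by apply/funext => y; rewrite /sp big_cons. Qed.

Lemma sp_nil : sp [::] = cst 0.
Proof. by apply/funext => y; rewrite /sp big_nil. Qed.

Lemma sp_prop s x : allS s -> N x ->
  differentiable (sp s) x /\ forall i, 'D_(edir R i) (sp s) x = sp (dseq i s) x.
Proof.
elim: s => [|p s IH] aS Nx.
  rewrite sp_nil; split; first exact: differentiable_cst.
  by move=> i; rewrite derive_cst.
have [[s1 s2] aS'] := aS.
have [d1 d2] := IH aS' Nx.
have dp : differentiable (fun y => p.1 y * p.2 y) x.
  have -> : (fun y => p.1 y * p.2 y) = p.1 * p.2 by [].
  by apply: differentiableM; [exact: (smooth_differentiable s1 Nx)|exact: (smooth_differentiable s2 Nx)].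
rewrite sp_cons; split; first exact: differentiableD.
move=> i; rewrite deriveD; last 2 first.
- exact: diff_derivable.
- exact: diff_derivable.
rewrite d2 /= /sp !big_cons addrA; congr (_ + _).
have h := deriveM (smooth_derivable (v:=edir R i) s1 Nx) (smooth_derivable (v:=edir R i) s2 Nx).
rewrite [LHS](_ : _ = 'D_(edir R i) (p.1 * p.2) x) // h /=.
rewrite addrC; congr (_ + _); exact: mulrC.
Qed.

Lemma allS_dseq s i : allS s -> allS (dseq i s).
Proof.
elim: s => [|p s IH] //= [[s1 s2] aS].
split; first by split => //; exact: smooth_partial.
split; first by split => //; exact: smooth_partial.
exact: IH.
Qed.

Lemma smooth_sp s : allS s -> smooth_on N (sp s).
Proof.
move=> aS.
apply: (@smooth_ind _ _ _ oN (fun F => exists s, allS s /\ forall x, N x -> F x = sp s x)); last by exists s.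
  move=> F [s' [a' e]] x Nx.
  apply: (@eqN_differentiable _ _ _ oN (sp s')) => //; first by move=> y Ny; rewrite e.
  by have [] := sp_prop a' Nx.
move=> F [s' [a' e]] i; exists (sp (dseq i s')); split.
  by exists (dseq i s'); split => //; exact: allS_dseq.
move=> x Nx; rewrite (@eqN_derive _ _ _ oN F (sp s') x _ e Nx).
by have [_ ->] := sp_prop a' Nx.
Qed.

Lemma smooth_mul f g : smooth_on N f -> smooth_on N g -> smooth_on N (fun x => f x * g x).
Proof.
move=> sf sg; have := @smooth_sp [:: (f, g)] (conj (conj sf sg) I).
apply: (smooth_eqN oN) => y _; by rewrite /sp big_seq1.
Qed.
End Gen2.
Section Gen3.
Variable R : realType.
Variable n : nat.
Implicit Types f g : 'rV[R]_n -> R.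
Variable N : set 'rV[R]_n.
Hypothesis oN : open N.

Lemma smooth_ext f g : smooth_on N f -> (forall y, N y -> f y = g y) -> smooth_on N g.
Proof. by move=> sf fg; exact: (smooth_eqN oN fg sf). Qed.

Lemma smooth_sum (I : Type) (r : seq I) (P : pred I) (F : I -> 'rV[R]_n -> R) :
  (forall i, P i -> smooth_on N (F i)) -> smooth_on N (fun x => \sum_(i <- r | P i) F i x).
Proof.
move=> sF; elim: r => [|i r IH].
  by apply: (smooth_ext (smooth_cst oN (0:R))) => y _; rewrite big_nil.
case Pi: (P i).
  apply: (smooth_ext (smooth_add oN (sF i Pi) IH)) => y _; by rewrite big_cons Pi.
by apply: (smooth_ext IH) => y _; rewrite big_cons Pi.
Qed.

Lemma smooth_prod (I : Type) (r : seq I) (P : pred I) (F : I -> 'rV[R]_n -> R) :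
  (forall i, P i -> smooth_on N (F i)) -> smooth_on N (fun x => \prod_(i <- r | P i) F i x).
Proof.
move=> sF; elim: r => [|i r IH].
  by apply: (smooth_ext (smooth_cst oN (1:R))) => y _; rewrite big_nil.
case Pi: (P i).
  apply: (smooth_ext (smooth_mul oN (sF i Pi) IH)) => y _; by rewrite big_cons Pi.
by apply: (smooth_ext IH) => y _; rewrite big_cons Pi.
Qed.

Lemma smooth_opp f : smooth_on N f -> smooth_on N (fun x => - f x).
Proof.
move=> sf; apply: (smooth_ext (smooth_mul oN (smooth_cst oN (-1:R)) sf)) => y _.
by rewrite mulN1r.
Qed.

Lemma pow_derivable f x v k : derivable f x v -> derivable (fun y => f y ^+ k) x v.
Proof. by move=> df; rewrite -exprfctE; exact: derivableX. Qed.

Lemma pow_differentiable f x k : differentiable f x -> differentiable (fun y => f y ^+ k) x.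
Proof.
move=> df; elim: k => [|k IH].
  have -> : (fun y => f y ^+ 0) = cst 1 by apply/funext => y; rewrite expr0.
  exact: differentiable_cst.
have -> : (fun y => f y ^+ k.+1) = f * (fun y => f y ^+ k).
  by apply/funext => y; rewrite exprS.
exact: differentiableM.
Qed.

Lemma smooth_inv f : smooth_on N f -> (forall x, N x -> f x != 0) ->
  smooth_on N (fun x => (f x)^-1).
Proof.
move=> sf f0.
pose h := fun y => (f y)^-1.
have dh x : N x -> differentiable h x.
  by move=> Nx; apply: differentiableV; [exact: smooth_differentiable sf Nx|exact: f0].
pose C := (fun F => exists a k, smooth_on N a /\
   forall x, N x -> F x = a x * h x ^+ k).
have CF : C h.
  exists (fun _ => 1), 1%N; split; first exact: (smooth_cst oN).
  by move=> x _; rewrite mul1r expr1.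
have Cd : forall F, C F -> forall x, N x -> differentiable F x.
  move=> F [a [k [sa e]]] x Nx.
  apply: (@eqN_differentiable _ _ _ oN (a * (fun y => h y ^+ k))) => //.
    by move=> y Ny; rewrite e.
  apply: differentiableM; first exact: smooth_differentiable sa Nx.
  by apply: pow_differentiable; exact: dh.
suff CD : forall F, C F -> forall i : 'I_n, exists G, C G /\ forall x, N x -> 'D_(edir R i) F x = G x.
  exact: (smooth_ind oN Cd CD CF).
move=> F [a [k [sa e]]] i.
exists (fun x => ('D_(edir R i) a x * f x + (- k%:R) * (a x * 'D_(edir R i) f x)) * h x ^+ k.+1).
split.
  exists (fun x => 'D_(edir R i) a x * f x + (- k%:R) * (a x * 'D_(edir R i) f x)), k.+1.
  split => //.
  apply: (smooth_add oN).
    by apply: (smooth_ext (smooth_mul oN (smooth_partial i sa) sf)).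
  apply: (smooth_ext (smooth_mul oN (smooth_cst oN (1 *- k)) (smooth_mul oN sa (smooth_partial i sf)))).
  by [].
move=> x Nx.
rewrite (@eqN_derive _ _ _ oN F (a * (fun y => h y ^+ k)) x _ e Nx).
have dh' : derivable h x (edir R i) by apply: diff_derivable; exact: dh.
rewrite deriveM; last 2 first.
- exact: smooth_derivable sa Nx.
- exact: pow_derivable.
rewrite -exprfctE deriveX // deriveV; last 2 first.
- exact: f0.
- exact: smooth_derivable sf Nx.
have fx0 := f0 x Nx.
rewrite /h /=.
clear e.
have sc : forall a b : R, a *: b = a * b by [].
rewrite !sc.
case: k => [|k].
  rewrite mul0r mul0r mulr0 add0r expr0 mul1r expr1 mulr0n oppr0 mul0r addr0.
  by rewrite mulfK.
rewrite succnK !exprS -[1 *- k.+1]/(- (k.+1)%:R).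
set t := (f x)^-1 ^+ k.
by field.
Qed.

End Gen3.
Section Comp.
Variable R : realType.
Variables n m : nat.
Variable phi : 'rV[R]_n -> 'rV[R]_m.
Hypothesis hlin : forall (h : R) v x, phi (h *: v + x) = h *: phi v + phi x.
Hypothesis hdir : forall i : 'I_n, phi (edir R i) = 0 \/ exists k, phi (edir R i) = edir R k.

Lemma phi0 : phi 0 = 0.
Proof.
have e := hlin 1 0 0; rewrite !scale1r !addr0 in e.
by apply: (addrI (phi 0)); rewrite addr0 -e.
Qed.

Lemma phi_sum (I : Type) (r : seq I) (c : I -> R) (w : I -> 'rV[R]_n) :
  phi (\sum_(i <- r) c i *: w i) = \sum_(i <- r) c i *: phi (w i).
Proof.
elim: r => [|i r IH]; first by rewrite !big_nil phi0.
by rewrite !big_cons hlin IH.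
Qed.

Lemma row_decomp (x : 'rV[R]_n) : x = \sum_(k < n) x 0 k *: edir R k.
Proof.
apply/rowP => j; rewrite summxE (bigD1 j) //= big1 ?addr0.
  by rewrite !mxE eqxx /= eqxx mulr1.
move=> k kj; rewrite !mxE eqxx /=.
by rewrite eq_sym (negbTE kj) mulr0.
Qed.

Lemma phi_differentiable x : differentiable phi x.
Proof.
have -> : phi = \sum_(k < n) (fun z : 'rV[R]_n => z 0 k *: phi (edir R k)).
  apply/funext => z; rewrite fct_sumE {1}(row_decomp z).
  by rewrite phi_sum.
apply: differentiable_sum => k.
apply: differentiableZl.
exact: (@differentiable_coord R 1 n x 0 k).
Qed.

Lemma derive_comp_lin (f : 'rV[R]_m -> R) x v :
  'D_v (fun y => f (phi y)) x = 'D_(phi v) f (phi x).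
Proof.
rewrite /derive.
have E : (fun h : R => h^-1 *: (((fun y => f (phi y)) \o shift x) (h *: v) - f (phi x))) =
  (fun h : R => h^-1 *: ((f \o shift (phi x)) (h *: phi v) - f (phi x))).
  by apply/funext => h /=; rewrite hlin.
by rewrite E.
Qed.

Lemma smooth_comp (V : set 'rV[R]_m) (N : set 'rV[R]_n) (f : 'rV[R]_m -> R) :
  open V -> open N -> (forall x, N x -> V (phi x)) -> smooth_on V f ->
  smooth_on N (fun x => f (phi x)).
Proof.
move=> oV oN NV sf.
pose C := fun F : 'rV[R]_n -> R => exists g, smooth_on V g /\ forall x, N x -> F x = g (phi x).
have CF : C (fun x => f (phi x)) by exists f.
have Cd : forall F, C F -> forall x, N x -> differentiable F x.
  move=> F [g [sg e]] x Nx.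
  apply: (@eqN_differentiable _ _ _ oN (g \o phi)) => //.
    by move=> y Ny; rewrite e.
  apply: differentiable_comp; first exact: phi_differentiable.
  exact: (smooth_differentiable sg (NV x Nx)).
suff CD : forall F, C F -> forall i : 'I_n, exists G, C G /\ forall x, N x -> 'D_(edir R i) F x = G x.
  exact: (smooth_ind oN Cd CD CF).
move=> F [g [sg e]] i.
case: (hdir i) => [h0|[k hk]].
  exists (fun _ => 0); split; first by exists (fun _ => 0); split => //; exact: (smooth_cst oV).
  move=> x Nx; rewrite (@eqN_derive _ _ _ oN F (fun y => g (phi y)) x _ e Nx).
  by rewrite derive_comp_lin h0 derive0.
exists (fun x => 'D_(edir R k) g (phi x)); split.
  by exists (fun z => 'D_(edir R k) g z); split => //; exact: smooth_partial.
move=> x Nx; rewrite (@eqN_derive _ _ _ oN F (fun y => g (phi y)) x _ e Nx).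
by rewrite derive_comp_lin hk.
Qed.

End Comp.
Section Concrete.
Variable R : realType.

Definition projM (x : 'rV[R]_3) : 'rV[R]_2 := \row_(a < 2) x 0 (ord23 a).
Definition piM (x : 'rV[R]_3) : 'rV[R]_3 := emb (projM x).

Lemma emb_lin (h : R) v x : emb (h *: v + x) = h *: emb v + emb x.
Proof.
apply/rowP => i; rewrite !mxE; case: ifP => _ //.
by rewrite mulr0 addr0.
Qed.

Lemma proj_lin (h : R) v x : projM (h *: v + x) = h *: projM v + projM x.
Proof. by apply/rowP => i; rewrite !mxE. Qed.

Lemma pi_lin (h : R) v x : piM (h *: v + x) = h *: piM v + piM x.
Proof. by rewrite /piM proj_lin emb_lin. Qed.

Lemma ord3_cases (i : 'I_3) : i = 0 \/ i = 1 \/ i = 2%:R.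
Proof.
case: i => [[|[|[|k]]] Hk].
- by left; apply: val_inj.
- by right; left; apply: val_inj.
- by right; right; apply: val_inj.
- by [].
Qed.

Lemma ord2_cases (a : 'I_2) : a = 0 \/ a = 1.
Proof.
case: a => [[|[|k]] Hk].
- by left; apply: val_inj.
- by right; apply: val_inj.
- by [].
Qed.

Lemma emb_dir (a : 'I_2) : emb (edir R a) = edir R (ord23 a).
Proof.
apply/rowP => i; rewrite !mxE.
case: (ord2_cases a) => ->; case: (ord3_cases i) => [->|[->|->]] //=; by rewrite -val_eqE /= inordK.
Qed.

Lemma proj_dir (i : 'I_3) : projM (edir R i) = 0 \/ exists k, projM (edir R i) = edir R k.
Proof.
case: (ord3_cases i) => [->|[->|->]].
- right; exists 0; apply/rowP => a; rewrite !mxE.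
  by case: (ord2_cases a) => ->.
- right; exists 1; apply/rowP => a; rewrite !mxE.
  by case: (ord2_cases a) => ->.
- left; apply/rowP => a; rewrite !mxE.
  by case: (ord2_cases a) => ->.
Qed.

Lemma pi_dir (i : 'I_3) : piM (edir R i) = 0 \/ exists k, piM (edir R i) = edir R k.
Proof.
rewrite /piM; case: (proj_dir i) => [->|[k ->]].
- left; apply/rowP => a; rewrite !mxE; case: ifP => //.
- right; exists (ord23 k); exact: emb_dir.
Qed.

Lemma emb_dir' (a : 'I_2) : emb (edir R a) = 0 \/ exists k, emb (edir R a) = edir R k.
Proof. by right; exists (ord23 a); exact: emb_dir. Qed.

Lemma proj_emb (y : 'rV[R]_2) : projM (emb y) = y.
Proof.
apply/rowP => a; rewrite !mxE /=.
case: (ord2_cases a) => -> /=; congr (y 0 _); apply: val_inj; by rewrite /= inordK.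
Qed.

Lemma pi_emb (y : 'rV[R]_2) : piM (emb y) = emb y.
Proof. by rewrite /piM proj_emb. Qed.

Lemma pi_pi x : piM (piM x) = piM x.
Proof. exact: pi_emb. Qed.

Lemma emb2 (y : 'rV[R]_2) : emb y 0 2%:R = 0.
Proof. by rewrite !mxE. Qed.

Lemma pi_e2 : piM (edir R 2%:R) = 0.
Proof.
apply/rowP => i; rewrite !mxE; case: ifP => // Hi.
case: (ord3_cases i) Hi => [->|[->|->]] //= _; by rewrite -val_eqE /= inordK.
Qed.

Lemma pi_shift2 (h : R) x : piM (h *: edir R 2%:R + x) = piM x.
Proof. by rewrite pi_lin pi_e2 scaler0 add0r. Qed.

Lemma shift2_coord (h : R) (x : 'rV[R]_3) : (h *: edir R 2%:R + x) 0 2%:R = h + x 0 2%:R.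
Proof. by rewrite !mxE eqxx /= mulr1. Qed.

End Concrete.
Arguments projM {R}. Arguments piM {R}.
Section Frame.
Variable R : realType.
Variable n : nat.
Variable G : 'M[R]_n.
Variable bb : 'I_n -> 'rV[R]_n.
Definition Bm : 'M[R]_n := \matrix_(j, i) bb j 0 i.
Hypothesis ortho : forall j k, gdot G (bb j) (bb k) = (j == k)%:R.

Lemma row_Bm j : row j Bm = bb j.
Proof. by apply/rowP => i; rewrite !mxE. Qed.

Lemma gdot_entry (a c : 'rV[R]_n) : gdot G a c = \sum_k (\sum_l a 0 l * G l k) * c 0 k.
Proof.
rewrite /gdot !mxE; apply: eq_bigr => k _; rewrite !mxE; congr (_ * _).
Qed.

Lemma BGBt : Bm *m G *m Bm^T = 1%:M.
Proof.
apply/matrixP => j k.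
have -> : (1%:M : 'M[R]_n) j k = (j == k)%:R by rewrite mxE.
rewrite -ortho gdot_entry !mxE; apply: eq_bigr => i _; rewrite !mxE; congr (_ * _).
by apply: eq_bigr => l _; rewrite !mxE.
Qed.

Lemma det_frame : \det G * (\det Bm) ^+ 2 = 1.
Proof.
have := congr1 determinant BGBt.
rewrite !det_mulmx det_tr det1 => <-.
by rewrite expr2 mulrA mulrC mulrA.
Qed.

Lemma frame_expand (X : 'rV[R]_n) : \sum_j gdot G X (bb j) *: bb j = X.
Proof.
have h1 : (G *m Bm^T) *m Bm = 1%:M.
  by apply: mulmx1C; rewrite mulmxA BGBt.
have -> : \sum_j gdot G X (bb j) *: bb j = (X *m G *m Bm^T) *m Bm.
  rewrite mulmx_sum_row; apply: eq_bigr => j _; rewrite row_Bm; congr (_ *: _).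
  rewrite /gdot !mxE; apply: eq_bigr => k _; by rewrite !mxE.
by rewrite -(mulmxA X G) -mulmxA h1 mulmx1.
Qed.

End Frame.
Section Misc.
Variable R : realType.

Lemma sum3 (F : 'I_3 -> R) : \sum_(i < 3) F i = F 0 + F 1 + F 2%:R.
Proof.
rewrite !big_ord_recl big_ord0 addr0 addrA.
have -> : (lift ord0 (lift ord0 (ord0 : 'I_1)) : 'I_3) = 2%:R by apply: val_inj.
have -> : (lift ord0 (ord0 : 'I_2) : 'I_3) = 1 by apply: val_inj.
by [].
Qed.

Lemma sum2 (F : 'I_2 -> R) : \sum_(i < 2) F i = F 0 + F 1.
Proof.
rewrite !big_ord_recl big_ord0 addr0.
have -> : (lift ord0 (ord0 : 'I_1) : 'I_2) = 1 by apply: val_inj.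
by [].
Qed.

Lemma ord23_0 : ord23 0 = 0. Proof. by apply: val_inj. Qed.
Lemma ord23_1 : ord23 1 = 1. Proof. by apply: val_inj. Qed.

Variable n : nat.

Lemma derive_quot (f : 'rV[R]_n -> R) x v c :
  (forall h : R, h != 0 -> h^-1 *: (f (h *: v + x) - f x) = c) -> 'D_v f x = c.
Proof.
move=> H.
have hc : (fun h : R => h^-1 *: ((f \o shift x) (h *: v) - f x)) @ 0^' --> c.
  apply: cvg_near_cst.
  near=> h; rewrite /= H //; near: h; exact: nbhs_dnbhs_neq.
exact: (cvg_lim _ hc).
Unshelve. all: by end_near.
Qed.

Lemma smooth_coord (N : set 'rV[R]_n) (k : 'I_n) : open N -> smooth_on N (fun x => x 0 k).
Proof.
move=> oN.
pose C := fun F : 'rV[R]_n -> R => (exists c, F = fun _ => c) \/ F = (fun x => x 0 k).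
have Cd : forall F, C F -> forall x, N x -> differentiable F x.
  move=> F [[c ->]|->] x _; first exact: differentiable_cst.
  exact: (@differentiable_coord R 1 n x 0 k).
suff CD : forall F, C F -> forall i : 'I_n, exists G, C G /\ forall x, N x -> 'D_(edir R i) F x = G x.
  by apply: (smooth_ind oN Cd CD); right.
move=> F [[c ->]|->] i.
  by exists (fun _ => 0); split; [left; exists 0|move=> x _; rewrite (derive_cst c)].
exists (fun _ => edir R i 0 k); split; first by left; eexists.
move=> x _; apply: derive_quot => h h0.
by rewrite !mxE addrK /GRing.scale /= mulrA mulVf // mul1r.
Qed.

Lemma smooth_sub (U N : set 'rV[R]_n) f : smooth_on U f -> N `<=` U -> smooth_on N f.
Proof. by move=> sf NU l x Nx; apply: sf; exact: NU. Qed.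

Lemma near_sign (f : 'rV[R]_n -> R) x : differentiable f x -> f x != 0 ->
  \forall y \near x, 0 < f y * f x.
Proof.
move=> df fx0.
have H := differentiable_continuous df.
case: (ltgtP (f x) 0) => [fneg|fpos|/eqP]; last by rewrite (negbTE fx0).
  have F1 := cvgr_lt (f x) H 0 fneg.
  near=> y; have fy : f y < 0 by near: y; exact: F1.
  nra.
have F1 := cvgr_gt (f x) H 0 fpos.
near=> y; have fy : 0 < f y by near: y; exact: F1.
nra.
Unshelve. all: by end_near.
Qed.

End Misc.
Section Main.
Variable R : realType.
Variable U : set 'rV[R]_3.
Variable g0 : 'rV[R]_3 -> 'M[R]_3.
Variable b : 'I_3 -> 'rV[R]_3 -> 'rV[R]_3.
Variable v : 'I_2 -> 'rV[R]_2 -> R.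
Hypothesis oU : open U.
Hypothesis rg : riemannian_on U g0.
Hypothesis sb : forall j i, smooth_on U (fun x => b j x 0 i).
Hypothesis ortho : forall x, U x -> forall j k, gdot (g0 x) (b j x) (b k x) = (j == k)%:R.
Hypothesis tang : forall y, U (emb y) -> b 0 (emb y) 0 2%:R = 0 /\ b 1 (emb y) 0 2%:R = 0.
Hypothesis sv : forall a, smooth_on [set y | U (emb y)] (v a).

Definition dB (x : 'rV[R]_3) := \det (Bm (fun j => b j x)).
Definition Vt (z : 'rV[R]_3) := frame_field (fun j => b (ord23 j)) (fun j _ => v j (projM z)) z.
Definition Gf (i : 'I_3) (z : 'rV[R]_3) := Vt z 0 i * (dB z)^-1.
Definition Wp (i : 'I_3) (x : 'rV[R]_3) := Gf i (piM x).
Definition Dv (x : 'rV[R]_3) := \sum_(a < 2) 'D_(edir R (ord23 a)) (Wp (ord23 a)) x.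
Definition Wf (i : 'I_3) (x : 'rV[R]_3) := if i == 2%:R then - (x 0 2%:R) * Dv x else Wp i x.
Definition Xf (x : 'rV[R]_3) : 'rV[R]_3 := \row_i (Wf i x * dB x).
Definition uf (j : 'I_3) (x : 'rV[R]_3) := gdot (g0 x) (Xf x) (b j x).
Definition NN := U `&` piM @^-1` U.
Definition V2 := (@emb R) @^-1` U.

Lemma emb_cont : continuous (@emb R).
Proof.
move=> y; apply: differentiable_continuous.
apply: (phi_differentiable (@emb_lin R)).
Qed.

Lemma pi_cont : continuous (@piM R).
Proof.
move=> y; apply: differentiable_continuous.
apply: (phi_differentiable (@pi_lin R)).
Qed.

Lemma oV2 : open V2.
Proof. by apply: open_comp => // y _; exact: emb_cont. Qed.

Lemma oNN : open NN.
Proof. apply: openI => //; apply: open_comp => // y _; exact: pi_cont. Qed.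

Lemma NN_U x : NN x -> U x. Proof. by case. Qed.
Lemma NN_pi x : NN x -> NN (piM x). Proof. by case=> _ h; split => //=; rewrite pi_pi. Qed.
Lemma NN_emb y : U (emb y) -> NN (emb y).
Proof. by move=> h; split => //=; rewrite pi_emb. Qed.

Lemma sdB : smooth_on U dB.
Proof.
have -> : dB = fun x => \sum_(s : 'S_3) (-1) ^+ s * \prod_(i < 3) b i x 0 (s i).
  apply/funext => x; rewrite /dB /determinant; apply: eq_bigr => s _; congr (_ * _).
  by apply: eq_bigr => i _; rewrite mxE.
apply: (smooth_sum oU) => s _.
apply: (smooth_mul oU); first exact: (smooth_cst oU).
by apply: (smooth_prod oU) => i _.
Qed.

Lemma dB_neq0 x : U x -> dB x != 0.
Proof.
move=> Ux; have := det_frame (ortho Ux); rewrite -/(dB x).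
apply: contra_eq_neq => ->; rewrite expr0n /= mulr0 eq_sym; exact: oner_neq0.
Qed.

Lemma ff_entry n m (bb : 'I_m -> 'rV[R]_n -> 'rV[R]_n) c x i :
  frame_field bb c x 0 i = \sum_j c j x * bb j x 0 i.
Proof. by rewrite /frame_field summxE; apply: eq_bigr => j _; rewrite !mxE. Qed.

Lemma sGf i : smooth_on NN (Gf i).
Proof.
have -> : Gf i = fun z => (\sum_(j < 2) v j (projM z) * b (ord23 j) z 0 i) * (dB z)^-1.
  by apply/funext => z; rewrite /Gf /Vt ff_entry.
apply: (smooth_mul oNN).
  apply: (smooth_sum oNN) => j _; apply: (smooth_mul oNN).
    apply: (smooth_comp (@proj_lin R) (@proj_dir R) oV2 oNN) => //.
    by move=> x [].
  by apply: (smooth_sub (sb _ _)) => x [].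
apply: (smooth_inv oNN); first by apply: (smooth_sub sdB) => x [].
by move=> x [Ux _]; exact: dB_neq0.
Qed.

Lemma sWp i : smooth_on NN (Wp i).
Proof.
apply: (smooth_comp (@pi_lin R) (@pi_dir R) oNN oNN); last exact: sGf.
exact: NN_pi.
Qed.

Lemma sDv : smooth_on NN Dv.
Proof. by apply: (smooth_sum oNN) => a _; apply: smooth_partial; exact: sWp. Qed.

Lemma sWf i : smooth_on NN (Wf i).
Proof.
rewrite /Wf; case: (i == 2%:R); last exact: sWp.
apply: (smooth_mul oNN); last exact: sDv.
by apply: (smooth_opp oNN); exact: (smooth_coord _ oNN).
Qed.

Lemma sXf i : smooth_on NN (fun x => Xf x 0 i).
Proof.
have -> : (fun x => Xf x 0 i) = fun x => Wf i x * dB x by apply/funext => x; rewrite mxE.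
apply: (smooth_mul oNN); first exact: sWf.
by apply: (smooth_sub sdB) => x [].
Qed.

Lemma suf j : smooth_on NN (uf j).
Proof.
have -> : uf j = fun x => \sum_k (\sum_l Xf x 0 l * g0 x l k) * b j x 0 k.
  by apply/funext => x; rewrite /uf gdot_entry.
apply: (smooth_sum oNN) => k _; apply: (smooth_mul oNN); last first.
  by apply: (smooth_sub (sb _ _)) => x [].
apply: (smooth_sum oNN) => l _; apply: (smooth_mul oNN); first exact: sXf.
by apply: (smooth_sub (rg.1 _ _)) => x [].
Qed.

Lemma Dv_shift (h : R) x : Dv (h *: edir R 2%:R + x) = Dv x.
Proof.
rewrite /Dv; apply: eq_bigr => a _.
by rewrite /Wp !(derive_comp_lin (@pi_lin R)) pi_shift2.
Qed.

Lemma Wf2 x : Wf 2%:R x = - (x 0 2%:R) * Dv x.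
Proof. by rewrite /Wf eqxx. Qed.

Lemma D_Wf2 x : 'D_(edir R 2%:R) (Wf 2%:R) x = - Dv x.
Proof.
apply: derive_quot => h h0.
rewrite !Wf2 Dv_shift shift2_coord.
rewrite /GRing.scale /=.
by field.
Qed.

Lemma Wf0 x : Wf 0 x = Wp 0 x. Proof. by []. Qed.
Lemma Wf1 x : Wf 1 x = Wp 1 x. Proof. by []. Qed.

Lemma sumdiv x : \sum_i 'D_(edir R i) (Wf i) x = 0.
Proof.
rewrite sum3 D_Wf2.
have -> : 'D_(edir R 0) (Wf 0) x = 'D_(edir R 0) (Wp 0) x by [].
have -> : 'D_(edir R 1) (Wf 1) x = 'D_(edir R 1) (Wp 1) x by [].
by rewrite /Dv sum2 ord23_0 ord23_1 subrr.
Qed.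

Lemma ff_X y : U y -> frame_field b uf y = Xf y.
Proof. by move=> Uy; rewrite /frame_field /uf (frame_expand (ortho Uy)). Qed.

Lemma sqrt_det y : U y -> Num.sqrt (\det (g0 y)) = `|dB y|^-1.
Proof.
move=> Uy; have e := det_frame (ortho Uy); rewrite -/(dB y) in e.
have d0 := dB_neq0 Uy.
have -> : \det (g0 y) = (`|dB y|^-1) ^+ 2.
  rewrite exprVn -normrX ger0_norm ?exprn_even_ge0 //.
  by apply: (mulIf (expf_neq0 2 d0)); rewrite e mulVf ?expf_neq0.
by rewrite sqrtr_sqr normrV ?unitfE ?normr_eq0 // normr_id.
Qed.

Lemma sign_eq (a c : R) : 0 < a * c -> `|a|^-1 * a = `|c|^-1 * c.
Proof.
move=> h.
have a0 : a != 0 by apply/eqP => a0; move: h; rewrite a0 mul0r ltxx.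
have c0 : c != 0 by apply/eqP => c0; move: h; rewrite c0 mulr0 ltxx.
case: (ltgtP a 0) => [an|ap|/eqP]; last by rewrite (negbTE a0).
  have cn : c < 0 by rewrite -(nmulr_rgt0 c an).
  by rewrite !ltr0_norm // !invrN !mulNr !mulVf.
have cp : 0 < c by rewrite -(pmulr_rgt0 c ap).
by rewrite !gtr0_norm // !mulVf.
Qed.

Lemma divg0 x : NN x -> divg g0 (frame_field b uf) x = 0.
Proof.
move=> Nx; have Ux := NN_U Nx.
pose e := `|dB x|^-1 * dB x.
have dd : differentiable dB x by exact: (smooth_differentiable sdB Ux).
have ns := near_sign dd (dB_neq0 Ux).
have key : forall i, 'D_(edir R i) (fun y => Num.sqrt (\det (g0 y)) * frame_field b uf y 0 i) x
    = e * 'D_(edir R i) (Wf i) x.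
  move=> i.
  have -> : 'D_(edir R i) (fun y => Num.sqrt (\det (g0 y)) * frame_field b uf y 0 i) x
     = 'D_(edir R i) (fun y => e * Wf i y) x.
    apply: near_eq_derive.
    near=> y.
    have Ny : NN y by near: y; exact: (nearN oNN).
    have Uy := NN_U Ny.
    have sy : 0 < dB y * dB x by near: y; exact: ns.
    rewrite sqrt_det // ff_X // mxE.
    by rewrite /e -(sign_eq sy) [Wf i y * _]mulrC mulrA.
  exact: (deriveMl e (smooth_derivable (v:=edir R i) (sWf i) Nx)).
rewrite /divg (eq_bigr _ (fun i _ => key i)) -mulr_sumr sumdiv !mulr0 //.
Unshelve. all: by end_near.
Qed.

Lemma gdot_suml m (G : 'M[R]_3) (c : 'I_m -> R) (a : 'I_m -> 'rV[R]_3) w :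
  gdot G (\sum_j c j *: a j) w = \sum_j c j * gdot G (a j) w.
Proof.
rewrite /gdot !mulmx_suml summxE; apply: eq_bigr => j _.
by rewrite -!scalemxAl mxE.
Qed.

Lemma Xf_emb y : U (emb y) -> Xf (emb y) = Vt (emb y).
Proof.
move=> Uy; apply/rowP => i; rewrite mxE.
have d0 := dB_neq0 Uy.
case: (ord3_cases i) => [->|[->|->]].
- by rewrite Wf0 /Wp /Gf pi_emb mulfVK.
- by rewrite Wf1 /Wp /Gf pi_emb mulfVK.
- rewrite Wf2 emb2 oppr0 !mul0r /Vt ff_entry sum2 ord23_0 ord23_1.
  by have [-> ->] := tang Uy; rewrite !mulr0 addr0.
Qed.

Lemma uf_emb y : U (emb y) ->
  [/\ uf 2%:R (emb y) = 0, uf 0 (emb y) = v 0 y & uf 1 (emb y) = v 1 y].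
Proof.
move=> Uy; rewrite /uf Xf_emb // /Vt /frame_field proj_emb.
rewrite !gdot_suml !sum2 ord23_0 ord23_1 !(ortho Uy).
by split; rewrite /= ?mulr0 ?mulr1 ?addr0 ?add0r.
Qed.

End Main.

Unset Implicit Arguments. Set Strict Implicit.

Theorem corollary2 (R : realType)
  (U : set 'rV[R]_3) (g0 : 'rV[R]_3 -> 'M[R]_3)
  (b : 'I_3 -> 'rV[R]_3 -> 'rV[R]_3)
  (v : 'I_2 -> 'rV[R]_2 -> R) :
  open U ->
  riemannian_on U g0 ->
  (* smooth orthonormal frame on U *)
  (forall j i, smooth_on U (fun x => b j x 0 i)) ->
  (forall x, U x -> forall j k, gdot (g0 x) (b j x) (b k x) = (j == k)%:R) ->
  (* b^1, b^2 tangent to M = {x_3 = 0} along M *)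
  (forall y, U (emb y) -> b 0 (emb y) 0 2 = 0 /\ b 1 (emb y) 0 2 = 0) ->
  (* v = v^1 b_z^1 + v^2 b_z^2 smooth on M, divergence free *)
  (forall a, smooth_on [set y | U (emb y)] (v a)) ->
  (forall y, U (emb y) ->
     divg (induced_metric g0)
       (fun y' => \row_(a < 2) frame_field (fun j => b (ord23 j)) (fun j _ => v j y')
                       (emb y') 0 (ord23 a)) y = 0) ->
  exists (N : set 'rV[R]_3) (u : 'I_3 -> 'rV[R]_3 -> R),
    [/\ [/\ open N, N `<=` U & forall y, U (emb y) -> N (emb y)],
        (forall j, smooth_on N (u j)),
        (* (i) *)
        (forall y, U (emb y) ->
           [/\ u 2 (emb y) = 0, u 0 (emb y) = v 0 y & u 1 (emb y) = v 1 y]),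
        (* (ii) *)
        (forall y, U (emb y) ->
           divg g0 (frame_field b u) (emb y) =
           divg (induced_metric g0)
             (fun y' => \row_(a < 2) frame_field (fun j => b (ord23 j)) (fun j _ => v j y')
                             (emb y') 0 (ord23 a)) y) &
        (* (iii) *)
        (forall x, N x -> divg g0 (frame_field b u) x = 0)].
Proof.
move=> oU rg sb ortho tang sv divv.
exists (NN U), (uf g0 b v); split.
- split; [exact: (oNN oU)|by move=> x; exact: NN_U|by move=> y; exact: NN_emb].
- by move=> j; exact: (suf oU rg sb ortho sv).
- by move=> y Uy; exact: (uf_emb v ortho tang Uy).
- move=> y Uy; rewrite divv //; exact: (divg0 oU sb ortho sv (NN_emb Uy)).
- by move=> x Nx; exact: (divg0 oU sb ortho sv Nx).
Qed.
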